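(* For $N\ge1$ let $\mathbf{m}=N(1,0,\dots,0)^\top\in\mathbb{R}^{N+1}$, $\mathbf{M}=\mathrm{diag}(\mathbf{m})$, and let $\mathbf{Q}_N$ be the tridiagonal matrix with $(\mathbf{Q}_N)_{kk}=-N$, $(\mathbf{Q}_N)_{k+1,k}=N-k$, $(\mathbf{Q}_N)_{k-1,k}=k$ (indices $0,\dots,N$) and zeros elsewhere. Fix $\mu>0$, let $\mathbf{p}=(p_0,\dots,p_N)$ be the positive vector with $\sum_ip_i=1$ satisfying $(\mathbf{M}+\mu\mathbf{Q}_N)\mathbf{p}=\overline{m}\,\mathbf{p}$ with $\overline{m}=\mathbf{m}\cdot\mathbf{p}$, let $\overline{r}=\overline{m}/N$ and $u=\mu/\overline{r}$. Then for every $a\in\{1,\dots,N\}$, $$\left|p_a-\frac{u^a}{(1+u)^{a+1}}\right|\le\frac{u^{a+1}2^a(a+1)}{\sqrt{N}}+\left(1-\frac{\binom{N}{a}a!}{N^a}\right)\frac{u^a}{(1+u)^{a+1}}.$$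
   Context: $\mathbf{p}$ is the normalized Perron eigenvector of $\mathbf{M}+\mu\mathbf{Q}_N$ (Crow–Kimura quasispecies model with single peaked fitness landscape) and $\overline{m}$ is the corresponding dominant eigenvalue. *)

(* Defs.v *)
From mathcomp Require Import all_boot all_order all_algebra.
From mathcomp Require Import reals.
Set Implicit Arguments. Unset Strict Implicit. Unset Printing Implicit Defensive.
Import Order.TTheory GRing.Theory Num.Theory.
Local Open Scope ring_scope.

Definition fitvec (R : ringType) (N : nat) : 'cV[R]_(N.+1) :=
  \col_(i < N.+1) (if (i : nat) == 0%N then N%:R else 0).

Definition fitmx (R : ringType) (N : nat) : 'M[R]_(N.+1) :=
  \matrix_(i < N.+1, j < N.+1) (if i == j then fitvec R N i 0 else 0).

Definition QN (R : ringType) (N : nat) : 'M[R]_(N.+1) :=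
  \matrix_(i < N.+1, k < N.+1)
    (if (i : nat) == k then - N%:R
     else if (i : nat) == k.+1 then (N - k)%:R
     else if (i : nat).+1 == k then k%:R
     else 0).

(* Main.v *)
Require Import Defs.
From mathcomp Require Import all_boot all_order all_algebra.
From mathcomp Require Import reals.
From mathcomp Require Import ring lra zify.
Import Order.TTheory GRing.Theory Num.Theory.
Local Open Scope ring_scope.

Lemma sum_pick (R : ringType) n m (f : nat -> R) :
  \sum_(k < n) (if (k:nat) == m then f k else 0) = if (m < n)%N then f m else 0.
Proof.
elim: n => [|n IH]; first by rewrite big_ord0.
rewrite big_ord_recr /= IH ltnS.
case: (ltngtP m n) => h.
- by rewrite addr0.
- by rewrite addr0.
- by rewrite add0r h.
Qed.

Section S.
Variables (R : realType) (N : nat) (mu : R) (p : 'cV[R]_(N.+1)).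
Definition PP (k : nat) : R := if (k < N.+1)%N then p (inord k) 0 else 0.

Lemma PPo (k : 'I_N.+1) : p k 0 = PP k.
Proof. by rewrite /PP ltn_ord inord_val. Qed.

Lemma PPbig k : (N < k)%N -> PP k = 0.
Proof. by move=> h; rewrite /PP ltnNge h. Qed.

Lemma QNrow (i : 'I_N.+1) :
  \sum_(k < N.+1) QN R N i k * p k 0 =
   - N%:R * PP i + (if (0 < i)%N then (N - i.-1)%:R * PP i.-1 else 0)
   + (i.+1)%:R * PP i.+1.
Proof.
have -> : \sum_(k < N.+1) QN R N i k * p k 0 =
  \sum_(k < N.+1) ((if (k:nat) == i then - N%:R * PP k else 0)
     + (if (k:nat).+1 == i then (N - k)%:R * PP k else 0)
     + (if (k:nat) == i.+1 then (k:nat)%:R * PP k else 0)).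
  apply: eq_bigr => k _; rewrite mxE PPo.
  case: (eqVneq (i:nat) k) => [->|n1].
    by rewrite (gtn_eqF (ltnSn k)) (ltn_eqF (ltnSn k)) !addr0.
  rewrite add0r.
  case: (eqVneq (i:nat) k.+1) => [->|n2].
    by rewrite (@ltn_eqF k k.+2) ?addr0.
  rewrite add0r (eq_sym (nat_of_ord k)); case: ifP => _; by rewrite ?mul0r.
rewrite !big_split /= (@sum_pick _ _ _ (fun k => - N%:R * PP k)) (@sum_pick _ _ _ (fun k => k%:R * PP k)) ltn_ord.
congr (_ + _ + _).
  case E: (nat_of_ord i) => [|j] /=.
    by rewrite big1 // => k _.
  have hj : (j < N.+1)%N by have := ltn_ord i; rewrite E => /ltnW.
  have := @sum_pick R N.+1 j (fun k => (N - k)%:R * PP k).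
  under eq_bigr do rewrite eqSS.
  by rewrite hj => ->.
by case: ifP => // /negbT; rewrite -leqNgt => h; rewrite PPbig ?mulr0.
Qed.
End S.

Theorem lemma1 (R : realType) (N : nat) (hN : (1 <= N)%N) (mu : R) (hmu : 0 < mu)
  (p : 'cV[R]_(N.+1)) (mbar : R) :
  (forall i, 0 < p i 0) ->
  \sum_(i < N.+1) p i 0 = 1 ->
  mbar = \sum_(i < N.+1) fitvec R N i 0 * p i 0 ->
  (fitmx R N + mu *: QN R N) *m p = mbar *: p ->
  let rbar := mbar / N%:R in
  let u := mu / rbar in
  forall a : 'I_N.+1, (1 <= a)%N ->
    `| p a 0 - u ^+ a / (1 + u) ^+ a.+1 |
      <= u ^+ a.+1 * 2 ^+ a * a.+1%:R / Num.sqrt (N%:R)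
         + (1 - ('C(N, a) * a`!)%:R / N%:R ^+ a) * (u ^+ a / (1 + u) ^+ a.+1).
Proof.
move=> hp hs hm heq rbar u a ha.
set P := @PP R N p.
have Ppos : forall k, (k <= N)%N -> 0 < P k.
  by move=> k hk; rewrite /P /PP ltnS hk.
have Pge0 : forall k, 0 <= P k.
  move=> k; case: (leqP k N) => hk; first exact/ltW/Ppos.
  by rewrite /P PPbig ?mul0r.
have Npos : 0 < (N%:R : R) by rewrite ltr0n.
have hm' : mbar = N%:R * P 0.
  rewrite hm (eq_bigr (fun k : 'I_N.+1 => if (k:nat) == 0%N then N%:R * P k else 0)).
    by rewrite (@sum_pick _ _ _ (fun k => N%:R * P k)).
  by move=> k _; rewrite mxE PPo; case: ifP => _; rewrite ?mul0r.
have row : forall i : 'I_N.+1, mbar * P i = (if (i:nat) == 0%N then N%:R else 0) * P i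
   + mu * (- N%:R * P i + (if (0 < i)%N then (N - i.-1)%:R * P i.-1 else 0)
   + (i.+1)%:R * P i.+1).
  move=> i; have := congr1 (fun M : 'M[R]_(N.+1,1) => M i 0) heq; rewrite /= [RHS]mxE (@PPo R N p i) => <-.
  rewrite -QNrow mxE.
  transitivity (\sum_(j < N.+1) ((if (j:nat) == i then
      (if (i:nat) == 0%N then N%:R else 0) * P j else 0) + mu * (QN R N i j * p j 0))).
    apply: eq_bigr => j _; rewrite !mxE mulrDl mulrA PPo; congr (_ + _).
    have -> : (nat_of_ord j == i) = (i == j) by rewrite eq_sym.
    by case: ifP => _; rewrite ?mul0r.
  rewrite big_split /= (@sum_pick _ _ _ (fun j => (if (i:nat) == 0%N then N%:R else 0) * P j)).
  by rewrite ltn_ord mulr_sumr.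
have rown : forall i, (i <= N)%N -> mbar * P i = (if i == 0%N then N%:R else 0) * P i
   + mu * (- N%:R * P i + (if (0 < i)%N then (N - i.-1)%:R * P i.-1 else 0)
   + (i.+1)%:R * P i.+1).
  by move=> i hi; have := row (inord i); rewrite inordK.
have P0pos : 0 < P 0 by apply: Ppos.
have hu : u = mu / P 0.
  by rewrite /u /rbar hm' mulrAC divff ?mul1r // gt_eqF.
have hmuu : mu = u * P 0 by rewrite hu divfK // gt_eqF.
have upos : 0 < u by rewrite hu divr_gt0.
set w := 1 + u.
have wpos : 0 < w by rewrite /w; lra.
have E0 : N%:R * P 0 * w = N%:R + u * P 1.
  have h := rown 0%N (leq0n N); rewrite hm' hmuu /= in h.
  have : P 0 * (N%:R * P 0 * w - (N%:R + u * P 1)) = 0 by rewrite /w; lra.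
  by move/eqP; rewrite mulf_eq0 gt_eqF //= subr_eq0 => /eqP.
have Ri : forall i, (1 <= i <= N)%N ->
    N%:R * P i * w = u * (N - i.-1)%:R * P i.-1 + u * i.+1%:R * P i.+1.
  move=> i /andP[i1 iN].
  have h := rown i iN; rewrite hm' hmuu i1 (gtn_eqF i1) /= in h.
  have : P 0 * (N%:R * P i * w - (u * (N - i.-1)%:R * P i.-1 + u * i.+1%:R * P i.+1)) = 0.
    by rewrite /w; lra.
  by move/eqP; rewrite mulf_eq0 gt_eqF //= subr_eq0 => /eqP.
have H1 : P 0 + P 1 <= 1.
  have -> : P 0 + P 1 = \sum_(k < N.+1) ((if (k:nat) == 0%N then P k else 0)
      + (if (k:nat) == 1%N then P k else 0)).
    by rewrite big_split /= (@sum_pick _ _ _ P) (@sum_pick _ _ _ P) (_ : (1 < N.+1)%N = true).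
  rewrite -hs; apply: ler_sum => k _; rewrite PPo -/P.
  case: ifP => /eqP h1; case: ifP => /eqP h2; rewrite ?add0r ?addr0 //.
  by move: h1 h2 => ->.
set F := fun j => (N - j.-1)%:R * P j.-1 - j%:R * P j.
have Fstep : forall j, (1 <= j <= N)%N -> u * F j = N%:R * P j + u * F j.+1.
  move=> j hj; have h := Ri j hj.
  have hN' : (N%:R : R) = (N - j)%:R + j%:R by rewrite -natrD subnK //; case/andP: hj.
  rewrite {}hN' in h *; rewrite /F /=; rewrite /w in h; lra.
have Fnn : forall d, (d <= N)%N -> 0 <= F (N.+1 - d)%N.
  elim=> [|d IH] hd.
    by rewrite subn0 /F /= subnn /P (@PPbig _ _ _ _ (ltnSn N)) mul0r mulr0 subrr.
  have j1 : (1 <= N.+1 - d.+1 <= N)%N by apply/andP; split; lia.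
  have e : (N.+1 - d = (N.+1 - d.+1).+1)%N by lia.
  have := Fstep _ j1; rewrite -e => h.
  have : 0 <= u * F (N.+1 - d.+1)%N.
    rewrite h; apply: addr_ge0; first by apply: mulr_ge0; [exact: ltW|].
    by apply: mulr_ge0; [exact: ltW| apply: IH; lia].
  by rewrite pmulr_rge0.
have B : forall j, (1 <= j <= N)%N -> P j <= u * P j.-1.
  move=> j hj; have h := Fstep j hj.
  have hF : 0 <= F j.+1.
    have e : (j.+1 = N.+1 - (N - j))%N by case/andP: hj => ? ?; lia.
    by rewrite e; apply: Fnn; lia.
  have hF2 : F j <= N%:R * P j.-1.
    rewrite /F; have : (N - j.-1)%:R * P j.-1 <= N%:R * P j.-1.
      by apply: ler_wpM2r => //; rewrite ler_nat leq_subr.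
    have : 0 <= j%:R * P j by apply: mulr_ge0.
    lra.
  have : u * F j <= u * (N%:R * P j.-1) by apply: ler_wpM2l => //; exact: ltW.
  have : 0 <= u * F j.+1 by apply: mulr_ge0 => //; exact: ltW.
  move=> h3 h4.
  have : N%:R * P j <= N%:R * (u * P j.-1) by lra.
  by rewrite ler_pM2l.
have G : forall k, P k.+1 <= u ^+ k * P 1.
  elim=> [|k IH]; first by rewrite expr0 mul1r.
  case: (leqP k.+2 N) => hk.
    apply: le_trans (B k.+2 hk) _; rewrite exprS -mulrA.
    by apply: ler_wpM2l => //; exact: ltW.
  by rewrite /P PPbig // mulr_ge0 // ?exprn_ge0 // ltW.
have H2 : 1 <= P 0 * w.
  have h0 : 0 <= u * P 1 by apply: mulr_ge0 => //; exact: ltW.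
  have : N%:R * 1 <= N%:R * (P 0 * w) by rewrite mulrA E0 mulr1; lra.
  by rewrite ler_pM2l.
have H3 : P 1 * w <= u.
  have : P 1 * w <= (1 - P 0) * w by apply: ler_wpM2r; [exact: ltW| lra].
  rewrite /w in H2 *; lra.
have L : forall k, (k <= N)%N -> u ^+ k * (N ^_ k)%:R <= P k * w ^+ k.+1 * N%:R ^+ k.
  elim=> [|k IH] hk; first by rewrite !expr0 expr1 mul1r mulr1 ffactn0.
  have h := Ri k.+1 hk; rewrite /= in h.
  have IH' := IH (ltnW hk).
  rewrite ffactnSr natrM !exprS.
  rewrite !exprS in IH'.
  have m1 : (u * (N - k)%:R) * (u ^+ k * (N ^_ k)%:R) <=
            (u * (N - k)%:R) * (P k * (w * w ^+ k) * N%:R ^+ k).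
    by apply: ler_wpM2l => //; apply: mulr_ge0 => //; exact: ltW.
  have h2 : 0 <= u * k.+2%:R * P k.+2 by apply: mulr_ge0 => //; apply: mulr_ge0 => //; exact: ltW.
  have m2 : (u * (N - k)%:R * P k) * ((w * w ^+ k) * N%:R ^+ k) <=
            (N%:R * P k.+1 * w) * ((w * w ^+ k) * N%:R ^+ k).
    apply: ler_wpM2r; last by lra.
    by apply: mulr_ge0; [apply: mulr_ge0; [exact: ltW| apply: exprn_ge0; exact: ltW] | apply: exprn_ge0].
  lra.
have w1 : 1 <= w by rewrite /w; lra.
have Pw : forall k, 0 <= w ^+ k by move=> k; apply: exprn_ge0; exact: ltW.
have Pu : forall k, 0 <= u ^+ k by move=> k; apply: exprn_ge0; exact: ltW.
have U : forall k, (k <= N)%N ->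
    N%:R * P k * w ^+ k.+1 - N%:R * u ^+ k <= u ^+ k.+1 * k.+1%:R ^+ 2 * w ^+ k.+1.
  elim=> [|k IH] hk.
    rewrite !expr1 expr0 mulr1 E0 expr1n mulr1.
    have : u * P 1 <= u * w by apply: ler_wpM2l; [exact: ltW| lra].
    lra.
  have h := Ri k.+1 hk; rewrite /= in h.
  have IH' := IH (ltnW hk).
  rewrite !exprS !expr0 !mulr1 in IH' *.
  set A := k.+1%:R in IH' *.
  have eA : (k.+2%:R : R) = A + 1 by rewrite /A -natr1.
  rewrite eA in h *.
  have A0 : 0 <= A by rewrite /A ler0n.
  have uw := ltW upos.
  have wk := Pw k; have uk := Pu k.
  have f0 := congr1 (fun x => x * (w * w ^+ k)) h; simpl in f0.
  have f1 : (N - k)%:R * (u * P k * (w * w ^+ k)) <= N%:R * (u * P k * (w * w ^+ k)).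
    apply: ler_wpM2r; last by rewrite ler_nat leq_subr.
    by apply: mulr_ge0; [apply: mulr_ge0 | apply: mulr_ge0 => //; lra].
  have f2 : u * (N%:R * P k * (w * w ^+ k) - N%:R * u ^+ k) <=
            u * (u * u ^+ k * (A * A) * (w * w ^+ k)) by apply: ler_wpM2l.
  have f3 : (u * (A + 1) * (w * w ^+ k)) * P k.+2 <= (u * (A + 1) * (w * w ^+ k)) * (u * u ^+ k * P 1).
    apply: ler_wpM2l; first by apply: mulr_ge0; [apply: mulr_ge0; lra| apply: mulr_ge0; lra].
    by have := G k.+1; rewrite exprS.
  have f4 : (u * (A + 1) * u * u ^+ k * w ^+ k) * (P 1 * w) <= (u * (A + 1) * u * u ^+ k * w ^+ k) * u.
    apply: ler_wpM2l => //.
    by repeat apply: mulr_ge0 => //; lra.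
  have c0 : 0 <= u * u * u ^+ k * w ^+ k by repeat apply: mulr_ge0 => //.
  have f5 : (u * u * u ^+ k * A * A * w * w ^+ k) * 1 <= (u * u * u ^+ k * A * A * w * w ^+ k) * w.
    apply: ler_wpM2l => //; repeat apply: mulr_ge0 => //; lra.
  have f6 : (u * u * u ^+ k * (A + 1) * w ^+ k) * u <= (u * u * u ^+ k * (A + 1) * w ^+ k) * (w * w).
    apply: ler_wpM2l; first by repeat apply: mulr_ge0 => //; lra.
    rewrite /w in w1 *; nra.
  have f7 : (u * u * u ^+ k * w * w * w ^+ k) * (A * A + (A + 1)) <=
            (u * u * u ^+ k * w * w * w ^+ k) * ((A + 1) * (A + 1)).
    apply: ler_wpM2l; first by repeat apply: mulr_ge0 => //; lra.
    nra.
  lra.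
have haN : (a <= N)%N by rewrite -ltnS ltn_ord.
rewrite (@PPo R N p a) -/P.
set q := u ^+ a / w ^+ a.+1.
set W := w ^+ a.+1.
have Wpos : 0 < W by rewrite /W exprn_gt0.
have Napos : 0 < (N%:R : R) ^+ a by rewrite exprn_gt0.
have ffle : forall k, (N ^_ k <= N ^ k)%N.
  by elim=> // k IHk; rewrite ffactnSr expnSr leq_mul // leq_subr.
set c := ('C(N, a) * a`!)%:R / N%:R ^+ a.
have c1 : c <= 1.
  by rewrite /c ler_pdivrMr // mul1r bin_ffact -natrX ler_nat.
have q0 : 0 <= q by rewrite /q divr_ge0 // ltW.
have low : c * q <= P a.
  rewrite /c /q mulf_div ler_pdivrMr ?mulr_gt0 // bin_ffact.
  have := L a haN; rewrite -/W; lra.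
have up : P a - q <= u ^+ a.+1 * a.+1%:R ^+ 2 / N%:R.
  rewrite ler_pdivlMr //.
  have e : (P a - q) * N%:R * W = N%:R * P a * W - N%:R * u ^+ a.
    by rewrite /q /W; field; rewrite gt_eqF.
  have := U a haN; rewrite -/W -e => h.
  have h' : (P a - q) * N%:R * W <= u ^+ a.+1 * a.+1%:R ^+ 2 * W by [].
  by rewrite ler_pM2r in h'.
set s := Num.sqrt (N%:R : R).
have s1 : 1 <= s.
  by rewrite /s -{1}sqrtr1; apply: ler_wsqrtr; rewrite ler1n.
have ss : s * s = N%:R by rewrite -expr2 /s sqr_sqrtr // ler0n.
have A2 : (a.+1%:R : R) <= 2 ^+ a.
  by rewrite -natrX ler_nat; apply: ltn_expl.
have B1 : u ^+ a.+1 * a.+1%:R ^+ 2 / N%:R <= u ^+ a.+1 * 2 ^+ a * a.+1%:R / s.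
  have spos : 0 < s by lra.
  have e1 : u ^+ a.+1 * a.+1%:R ^+ 2 / N%:R = (u ^+ a.+1 * a.+1%:R / s) * (a.+1%:R / s).
    by rewrite -ss; field; rewrite gt_eqF.
  have e2 : u ^+ a.+1 * 2 ^+ a * a.+1%:R / s = (u ^+ a.+1 * a.+1%:R / s) * 2 ^+ a.
    by ring.
  rewrite e1 e2; apply: ler_wpM2l.
    by apply: divr_ge0; [apply: mulr_ge0 => //; rewrite ler0n | lra].
  apply: le_trans A2; rewrite ler_pdivrMr //.
  have : 0 <= (a.+1%:R : R) by rewrite ler0n.
  nra.
have B0 : 0 <= u ^+ a.+1 * 2 ^+ a * a.+1%:R / s.
  apply: divr_ge0; last by lra.
  by apply: mulr_ge0; [apply: mulr_ge0 => //; apply: exprn_ge0 | rewrite ler0n].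
have cq : 0 <= (1 - c) * q by apply: mulr_ge0 => //; lra.
rewrite ler_norml; apply/andP; split.
  have : (1 - c) * q = q - c * q by ring.
  lra.
lra.
Qed.
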